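(* Let $i\geq1$ and $j\ge0$. The map $\varphi_i$ carries $M_i(j)$ isomorphically onto $N_{i-1}(\lfloor j/p\rfloor)$.
   Context: Let $p$ be an odd prime. In the mod $p$ dual Steenrod algebra let $\zeta_n,\overline{\tau}_n$ be the conjugates of Milnor's $\xi_n,\tau_n$ ($\zeta_0=1$). For $n\ge0$ let $(A/\!/E(n))_*=\mathbb{F}_p[\zeta_1,\zeta_2,\ldots]\otimes E(\overline{\tau}_{n+1},\overline{\tau}_{n+2},\ldots)$, a comodule over $E(n)_*=E(\overline{\tau}_0,\ldots,\overline{\tau}_n)$. Weight: $\mathrm{wt}(\zeta_k)=\mathrm{wt}(\overline{\tau}_k)=p^k$, additive on products of monomials. $M_i(j)$ is the span of the monomials of $(A/\!/E(i))_*$ of weight exactly $pj$; $N_{i-1}(m)$ is the span of the monomials of $(A/\!/E(i-1))_*$ of weight $\le pm$. $\varphi_i\colon(A/\!/E(i))_*\to(A/\!/E(i-1))_*$ is the algebra map with $\zeta_k\mapsto\zeta_{k-1}$ ($k\ge1$) and $\overline{\tau}_j\mapsto\overline{\tau}_{j-1}$ ($j\ge i+1$); it is a map of ungraded $E(i)_*$-comodules. *)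

(* Defs.v *)
From HB Require Import structures.
From mathcomp Require Import all_boot all_order all_algebra.
From mathcomp Require Import finmap.
From mathcomp Require Import monalg.

Set Implicit Arguments.
Unset Strict Implicit.
Unset Printing Implicit Defensive.

Import GRing.Theory.
Local Open Scope fset_scope.
Local Open Scope ring_scope.

(* Monomials of the (quotient of the) mod p dual Steenrod algebra            *)
(*   F_p[zeta_1, zeta_2, ...] (x) E(taubar_0, taubar_1, ...).                 *)
(* A monomial  zeta_1^{a_1} zeta_2^{a_2} ... taubar_{s_1} ... taubar_{s_r}    *)
(* (s_1 < ... < s_r) is encoded as the pair (a, S) where                      *)
(*   a : {fsfun nat -> nat with 0},  a k = exponent of zeta_(k+1)             *)
(*   (the shift by one because zeta_0 = 1 is not a generator), and            *)
(*   S : {fset nat}, the set of indices of the exterior generators taubar_s.  *)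
Definition mon := ({fsfun nat -> nat with 0%N} * {fset nat})%type.

Definition weight (p : nat) (m : mon) : nat :=
  (\sum_(k <- finsupp m.1) m.1 k * p ^ k.+1 + \sum_(s <- m.2) p ^ s)%N.

(* m is a monomial of (A//E(n))_* = F_p[zeta_1,...] (x) E(taubar_(n+1),...) *)
Definition in_AE (n : nat) (m : mon) : bool := all (fun s => n < s)%N m.2.

(* The ambient F_p-vector space with basis all monomials; (A//E(n))_* and the
   spaces M_i(j), N_{i-1}(m) are spans of sets of basis monomials. *)
Definition vspace (p : nat) := {malg 'F_p[mon]}.

Definition in_span (p : nat) (P : pred mon) (g : vspace p) : bool :=
  all P (msupp g).

Definition M_ (p i j : nat) : pred (vspace p) :=
  in_span (fun m => in_AE i m && (weight p m == p * j)%N).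

Definition N_ (p n m : nat) : pred (vspace p) :=
  in_span (fun mo => in_AE n mo && (weight p mo <= p * m)%N).

(* phi on monomials: zeta_k |-> zeta_(k-1) (zeta_0 = 1), taubar_j |-> taubar_(j-1).
   Being an algebra map that sends generators to generators (or 1) and
   preserves the order of the exterior generators, it sends the monomial
   (a, S) to the monomial (a', S') with a' k = a (k+1), S' = {s-1 | s in S}.
   (Only its values on monomials of (A//E(i))_*, i >= 1, matter.) *)
Definition phi_mon (m : mon) : mon :=
  ([fsfun k in [fset k'.-1 | k' in finsupp m.1] => m.1 k.+1],
   [fset s.-1 | s in m.2]).

Definition phi (p : nat) (g : vspace p) : vspace p :=
  \sum_(m <- msupp g) << g@_m *g phi_mon m >>.

Arguments M_ p i j : clear implicits.
Arguments N_ p n m : clear implicits.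

(* Main.v *)
Require Import Defs.
From HB Require Import structures.
From mathcomp Require Import all_boot all_order all_algebra.
From mathcomp Require Import finmap.
From mathcomp Require Import monalg.
From mathcomp Require Import zify.
Set Implicit Arguments.
Unset Strict Implicit.
Unset Printing Implicit Defensive.
Section Helpers.
Local Open Scope fset_scope.
Import GRing.Theory.

Lemma phi1E m k : (phi_mon m).1 k = m.1 k.+1.
Proof.
rewrite /phi_mon /= fsfun_fun; case: ifP => // /negbT H.
apply/esym/eqP; apply: contraNT H => nz; apply/imfsetP; exists k.+1 => //=.
by rewrite mem_finsupp.
Qed.

Lemma phi2E m s : 0%N \notin m.2 -> (s \in (phi_mon m).2) = (s.+1 \in m.2).
Proof.
move=> H0; apply/imfsetP/idP => [[x xin ->]|h]; last by exists s.+1.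
case: x xin => [|x] xin /=; last by [].
by rewrite xin in H0.
Qed.

Lemma fset_bound (A : {fset nat}) : exists N, forall x, x \in A -> (x < N)%N.
Proof.
exists (\max_(x <- A) x).+1 => x xA; rewrite ltnS.
exact: (@leq_bigmax_seq _ _ predT id x xA).
Qed.

Lemma sum_fset_ord (A : {fset nat}) (F : nat -> nat) N :
  (forall x, x \in A -> (x < N)%N) ->
  (\sum_(x <- A) F x = \sum_(0 <= x < N | x \in A) F x)%N.
Proof.
move=> HA; rewrite -[RHS]big_filter.
suff H : perm_eq (A : seq nat) [seq x <- index_iota 0 N | x \in A].
  exact: perm_big H.
apply: uniq_perm; first exact: fset_uniq.
  by rewrite filter_uniq // iota_uniq.
move=> x; rewrite mem_filter mem_iota add0n; case xA: (x \in A) => //=.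
by rewrite subn0 HA.
Qed.

Lemma sum_supp_ord (a : {fsfun nat -> nat with 0%N}) (F : nat -> nat) N :
  (forall x, x \in finsupp a -> (x < N)%N) ->
  (\sum_(x <- finsupp a) a x * F x = \sum_(0 <= x < N) a x * F x)%N.
Proof.
move=> HA; rewrite (sum_fset_ord _ HA) big_mkcond /=; apply: eq_bigr => i _.
by case: ifP => // /negbT /fsfun_dflt ->.
Qed.

Lemma weight_phi p m : 0%N \notin m.2 ->
  weight p m = (p * (m.1 0%N + weight p (phi_mon m)))%N.
Proof.
move=> H0.
have [N HN] := fset_bound (finsupp m.1 `|` m.2).
have HN1 : forall x, x \in finsupp m.1 -> (x < N.+1)%N.
  by move=> x xA; apply: ltnW; apply: HN; rewrite in_fsetU xA.
have HN2 : forall x, x \in m.2 -> (x < N.+1)%N.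
  by move=> x xA; apply: ltnW; apply: HN; rewrite in_fsetU xA orbT.
have HP1 : forall x, x \in finsupp (phi_mon m).1 -> (x < N)%N.
  move=> x; rewrite mem_finsupp phi1E -mem_finsupp => xA.
  have /HN/ltnW : x.+1 \in finsupp m.1 `|` m.2 by apply/fsetUP; left. by [].
have HP2 : forall x, x \in (phi_mon m).2 -> (x < N)%N.
  move=> x; rewrite phi2E // => xA.
  have /HN/ltnW : x.+1 \in finsupp m.1 `|` m.2 by apply/fsetUP; right. by [].
rewrite /weight (sum_supp_ord _ HN1) (sum_supp_ord _ HP1).
rewrite (sum_fset_ord _ HN2) (sum_fset_ord _ HP2).
rewrite big_nat_recl // [X in (_ + X)%N]big_mkcond big_nat_recl //.
rewrite (negbTE H0) /= add0n.
have -> : (\sum_(0 <= x < N) (phi_mon m).1 x * p ^ x.+1 =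
   \sum_(0 <= x < N) m.1 x.+1 * p ^ x.+1)%N.
  by apply: eq_bigr => x _; rewrite phi1E.
have -> : (\sum_(0 <= x < N | x \in (phi_mon m).2) p ^ x =
   \sum_(0 <= x < N) if x.+1 \in m.2 then p ^ x else 0)%N.
  by rewrite big_mkcond; apply: eq_bigr => x _; rewrite phi2E.
rewrite !mulnDr !big_distrr /= expn1 mulnC addnA; congr (_ + _ + _)%N.
  by apply: eq_bigr => i _; rewrite [(p ^ i.+2)%N]expnS mulnCA.
by apply: eq_bigr => i _; case: ifP => _; rewrite ?muln0 // expnS.
Qed.

Section Lin.
Variable p : nat.
Local Open Scope ring_scope.

Lemma coef_sumU (s : seq mon) (f : mon -> 'F_p) (F : mon -> mon) y :
  (\sum_(n <- s) << f n *g F n >> : vspace p)@_y = \sum_(n <- s | F n == y) f n.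
Proof.
rewrite (big_morph (mcoeff y) (mcoeffD y) (mcoeff0 y)) [RHS]big_mkcond /=.
by apply: eq_bigr => n _; rewrite mcoeffU; case: (F n == y).
Qed.

Lemma sum_single (s : seq mon) (f : mon -> 'F_p) (F : mon -> mon) n :
  uniq s -> {in s &, injective F} -> n \in s ->
  \sum_(n' <- s | F n' == F n) f n' = f n.
Proof.
move=> us Finj ns; rewrite big_mkcond (bigD1_seq n) //= eqxx big1_seq; first by rewrite addr0.
move=> n' /andP [nn' n's]; case: ifP => // /eqP E.
by rewrite (Finj _ _ n's ns E) eqxx in nn'.
Qed.

Lemma sum_none (s : seq mon) (f : mon -> 'F_p) (F : mon -> mon) y :
  (forall n, n \in s -> F n != y) -> \sum_(n' <- s | F n' == y) f n' = 0.
Proof.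
move=> H; rewrite big_seq_cond big1 // => n /andP [ns /eqP E].
by move: (H n ns); rewrite E eqxx.
Qed.

Lemma phiE (g : vspace p) :
  phi g = \sum_(m <- msupp g) << g@_m *g phi_mon m >>.
Proof. by []. Qed.

Lemma phi_coef_D (D : pred mon) (g : vspace p) m :
  {in D &, injective phi_mon} -> all D (msupp g) -> D m ->
  (phi g)@_(phi_mon m) = g@_m.
Proof.
move=> inj /allP aD Dm; rewrite phiE coef_sumU.
case: (boolP (m \in msupp g)) => ms.
  apply: sum_single => //; first exact: fset_uniq.
  by move=> a b /aD Da /aD Db; apply: inj.
rewrite sum_none ?mcoeff_outdom //.
move=> n ns; apply/negP => /eqP E.
by rewrite -(inj _ _ (aD _ ns) Dm E) ns in ms.
Qed.

Lemma phi_coef_out (g : vspace p) x :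
  (forall m, m \in msupp g -> phi_mon m != x) -> (phi g)@_x = 0.
Proof. by move=> H; rewrite phiE coef_sumU sum_none. Qed.

End Lin.

Lemma AE_0 i m : (1 <= i)%N -> in_AE i m -> 0%N \notin m.2.
Proof.
move=> i1 /allP H; apply/negP => /H /=; rewrite ltn0 //.
Qed.

Lemma phi_AE i m : (1 <= i)%N -> in_AE i m -> in_AE i.-1 (phi_mon m).
Proof.
move=> i1 H; have H0 := AE_0 i1 H; move/allP: H => H.
apply/allP => s; rewrite phi2E // => /H /=; lia.
Qed.

Lemma phi_weight_N p i j m : (0 < p)%N -> (1 <= i)%N -> in_AE i m ->
  weight p m = (p * j)%N -> (weight p (phi_mon m) <= p * (j %/ p))%N.
Proof.
move=> p0 i1 Hm Hw.
have E1 := weight_phi p (AE_0 i1 Hm).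
have Hpm := phi_AE i1 Hm.
have H0' : 0%N \notin (phi_mon m).2.
  by apply/negP => /(allP Hpm) /=; rewrite ltn0.
have E2 := weight_phi p H0'.
rewrite E2 leq_mul2l; apply/orP; right.
rewrite leq_divRL // mulnC -E2.
move: E1; rewrite Hw => /eqP; rewrite eqn_mul2l eqn0Ngt p0 /= => /eqP ->.
exact: leq_addl.
Qed.

Lemma phi_inj_D p i j : (0 < p)%N -> (1 <= i)%N ->
  {in (fun m => in_AE i m && (weight p m == p * j)%N) &, injective phi_mon}.
Proof.
move=> p0 i1 [a1 S1] [a2 S2] /andP [H1 /eqP W1] /andP [H2 /eqP W2] E.
have Z1 := AE_0 i1 H1; have Z2 := AE_0 i1 H2.
have E1 := weight_phi p Z1; have E2 := weight_phi p Z2.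
rewrite W1 E /= in E1; rewrite W2 in E2.
move: E1; rewrite E2 => /eqP; rewrite eqn_mul2l eqn0Ngt p0 /= eqn_add2r => /eqP A0.
congr pair.
  apply/fsfunP => -[|k] //; move: (phi1E (a1, S1) k) (phi1E (a2, S2) k).
  by rewrite E /= => -> ->.
apply/fsetP => -[|s].
  by move: Z1 Z2 => /= /negbTE -> /negbTE ->.
by move: (phi2E s Z1) (phi2E s Z2); rewrite E /= => <- <-.
Qed.

Definition psi (p j : nat) (n : mon) : mon :=
  ([fsfun k in 0%N |` [fset k'.+1 | k' in finsupp n.1] =>
      if k is k'.+1 then n.1 k' else (j - weight p n)%N],
   [fset s.+1 | s in n.2]).

Lemma psi10 p j n : (psi p j n).1 0%N = (j - weight p n)%N.
Proof. by rewrite /psi /= fsfun_fun fset1U1. Qed.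

Lemma psi1S p j n k : (psi p j n).1 k.+1 = n.1 k.
Proof.
rewrite /psi /= fsfun_fun; case: ifP => // /negbT H.
apply/esym/eqP; apply: contraNT H => nz; apply/fset1UP; right.
by apply/imfsetP; exists k => //=; rewrite mem_finsupp.
Qed.

Lemma psi2_0 p j n : 0%N \notin (psi p j n).2.
Proof. by apply/negP => /imfsetP [x _]. Qed.

Lemma psi2S p j n s : (s.+1 \in (psi p j n).2) = (s \in n.2).
Proof. by rewrite /psi /= mem_imfset //; move=> a b [->]. Qed.

Lemma phi_psi p j n : phi_mon (psi p j n) = n.
Proof.
case: n => a S; congr pair.
  by apply/fsfunP => k; rewrite phi1E psi1S.
by apply/fsetP => s; rewrite phi2E ?psi2_0 // psi2S.
Qed.

Lemma psi_D p i j n : (1 <= i)%N -> in_AE i.-1 n ->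
  (weight p n <= j)%N ->
  in_AE i (psi p j n) && (weight p (psi p j n) == p * j)%N.
Proof.
move=> i1 Hn Hw; apply/andP; split.
  apply/allP => -[|s] H; first by rewrite (negbTE (psi2_0 _ _ _)) in H.
  rewrite psi2S in H; move: (allP Hn s H) => /=; lia.
rewrite weight_phi ?psi2_0 // phi_psi psi10 subnK //.
Qed.

End Helpers.

Theorem mainTheorem13 (p : nat) (pp : prime p) (podd : odd p) (i j : nat) :
  (1 <= i)%N ->
  {in M_ p i j &, injective (@phi p)} /\
  (forall g, g \in M_ p i j -> phi g \in N_ p i.-1 (j %/ p)) /\
  (forall h, h \in N_ p i.-1 (j %/ p) -> exists2 g, g \in M_ p i j & phi g = h).
Proof.
move=> i1; have p0 : (0 < p)%N := prime_gt0 pp.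
pose D := fun m => in_AE i m && (weight p m == p * j)%N.
have inj : {in D &, injective phi_mon} := @phi_inj_D p i j p0 i1.
have MD : forall g, g \in M_ p i j -> all D (msupp g).
  by move=> g; rewrite unfold_in.
split; [|split].
- move=> g1 g2 H1 H2 E; apply/malgP => m.
  case: (boolP (D m)) => Dm.
    by rewrite -(phi_coef_D inj (MD _ H1) Dm) -(phi_coef_D inj (MD _ H2) Dm) E.
  have n1 : m \notin msupp g1.
    by apply/negP => /(allP (MD _ H1)); rewrite (negbTE Dm).
  have n2 : m \notin msupp g2.
    by apply/negP => /(allP (MD _ H2)); rewrite (negbTE Dm).
  by rewrite (mcoeff_outdom n1) (mcoeff_outdom n2).
- move=> g Hg; apply/allP => x; rewrite -mcoeff_neq0 => nz.
  case Hh: (has (fun m => phi_mon m == x) (msupp g)).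
    move/hasP: Hh => [m ms /eqP E].
    move: (allP (MD _ Hg) m ms) => /andP [Hm /eqP Hw]; rewrite -E.
    by apply/andP; split; [exact: phi_AE | exact: (phi_weight_N p0 i1)].
  rewrite phi_coef_out ?eqxx // in nz.
  by move=> m ms; apply/negP => E; move/hasP: Hh; apply; exists m.
- move=> h Hh.
  have HN : forall n, n \in msupp h -> in_AE i.-1 n && (weight p n <= p * (j %/ p))%N.
    by move=> n ns; apply: (allP Hh).
  have wj : forall n, n \in msupp h -> (weight p n <= j)%N.
    move=> n /HN /andP [_ H]; apply: (leq_trans H).
    by rewrite mulnC leq_trunc_div.
  have Dpsi : forall n, n \in msupp h -> D (psi p j n).
    by move=> n ns; apply: psi_D => //; [case/andP: (HN n ns) | exact: wj].
  pose g : vspace p := (\sum_(n <- msupp h) << h@_n *g psi p j n >>)%R.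
  have gsupp : forall y, y \in msupp g -> exists2 n, n \in msupp h & psi p j n = y.
    move=> y; rewrite -mcoeff_neq0 coef_sumU => nz.
    case Hh': (has (fun n => psi p j n == y) (msupp h)).
      by move/hasP: Hh' => [n ns /eqP E]; exists n.
    rewrite sum_none ?eqxx // in nz.
    by move=> n ns; apply/negP => E; move/hasP: Hh'; apply; exists n.
  have gM : g \in M_ p i j.
    by apply/allP => y /gsupp [n ns <-]; apply: Dpsi.
  exists g; first exact: gM.
  apply/malgP => x.
  case: (boolP (x \in msupp h)) => xs.
    rewrite -{1}(phi_psi p j x) (phi_coef_D inj (MD _ gM) (Dpsi _ xs)).
    rewrite coef_sumU sum_single //; first exact: fset_uniq.
    by move=> a b _ _ /(congr1 phi_mon); rewrite !phi_psi.
  rewrite (mcoeff_outdom xs); apply: phi_coef_out => m /gsupp [n ns <-].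
  rewrite phi_psi; apply/negP => /eqP E.
  by rewrite -E ns in xs.
Qed.
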